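(* Let $X$ be a finite nonempty set, $Y$ a nonempty compact metric space, and $u:X\times Y\to\mathbb{R}$ such that $y\mapsto u(x,y)$ is continuous for each $x\in X$. Run the Combinatorial-Continuous Double Oracle (CCDO) procedure with tolerance $\epsilon\ge 0$. Then: (1) If $\epsilon = 0$ and the procedure runs for infinitely many iterations, then for every subsequence of the subgame equilibria $\{(p_k^*,q_k^* )\}$ that converges weakly to some $(p^*,q^* )\in\Delta_X\times\Delta_Y$ (i.e. $p_k^*\Rightarrow p^*$, $q_k^*\Rightarrow q^*$ along the subsequence), the limit $(p^*,q^* )$ is a mixed Nash equilibrium of the whole game. (2) If $\epsilon>0$, the procedure terminates after finitely many iterations and its output $(p_k^*,q_k^* )$ is an $\epsilon$-equilibrium of the whole game.
   Context: Game: Player 1 picks $x\in X$, Player 2 picks $y\in Y$; Player 1 receives $u(x,y)$, Player 2 receives $-u(x,y)$. $\Delta_X$ is the set of probability vectors on $X$, $\Delta_Y$ the set of Borel probability measures on $Y$, and $U(p,q)=\sum_{x} p(x)\int_Y u(x,y)\,dq(y)$; pure strategies are identified with point masses. $(p^*,q^* )$ is a mixed Nash equilibrium if $U(p,q^* )\le U(p^*,q^* )\le U(p^*,q)$ for all $p\in\Delta_X,q\in\Delta_Y$, and an $\epsilon$-equilibrium if $U(p,q^* )-\epsilon\le U(p^*,q^* )\le U(p^*,q)+\epsilon$ for all such $p,q$. Weak convergence $q_k\Rightarrow q$ means $\int f\,dq_k\to\int f\,dq$ for all bounded continuous $f$ on $Y$; on $X$ it is coordinatewise convergence. Best response sets: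 $\mathbb{BR}_1(q)=\arg\max_{x\in X}U(x,q)$, $\mathbb{BR}_2(p)=\arg\min_{y\in Y}U(p,y)$. CCDO procedure: start from nonempty finite sets $X_1\subseteq X$, $Y_1\subseteq Y$. At iteration $k$: compute a mixed Nash equilibrium $(p_k^*,q_k^* )$ of the finite subgame $\langle X_k, Y_k, u\rangle$ (viewed as mixed strategies of the whole game supported on $X_k$, $Y_k$); choose $x_{k+1}\in\mathbb{BR}_1(q_k^* )$ and $y_{k+1}\in\mathbb{BR}_2(p_k^* )$; set $X_{k+1}=X_k\cup\{x_{k+1}\}$, $Y_{k+1}=Y_k\cup\{y_{k+1}\}$; stop and output $(p_k^*,q_k^* )$ if $U(x_{k+1},q_k^* )-U(p_k^*,y_{k+1})\le\epsilon$, otherwise continue. *)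

(* Defs.v *)
From HB Require Import structures.
From mathcomp Require Import all_boot all_order all_algebra.
From mathcomp Require Import all_classical all_reals all_analysis.
Set Implicit Arguments. Unset Strict Implicit. Unset Printing Implicit Defensive.
Import Order.TTheory GRing.Theory Num.Theory.
Import numFieldNormedType.Exports.
Local Open Scope classical_set_scope.
Local Open Scope ring_scope.

Notation borel Y := (g_sigma_algebraType (@open Y)) (only parsing).

Section Game.
Context {R : realType} {X : finType} {Y : ptopologicalType}.
Variable u : X -> Y -> R.

Definition is_dist (p : X -> R) : Prop :=
  (forall x, 0 <= p x) /\ \sum_(x : X) p x = 1.

Definition pt (x : X) : X -> R := fun x' => if x' == x then 1 else 0.

Definition U (p : X -> R) (q : {measure set (borel Y) -> \bar R}) : R :=
  \sum_(x : X) p x * fine (\int[q]_(y in [set: borel Y]) (u x y)%:E).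

Definition BR1 (q : probability (borel Y) R) : set X :=
  [set x | forall x' : X, U (pt x') q <= U (pt x) q].
Definition BR2 (p : X -> R) : set Y :=
  [set y | forall y' : Y, U p (@dirac _ (borel Y) y R) <= U p (@dirac _ (borel Y) y' R)].

Definition is_NE (p : X -> R) (q : probability (borel Y) R) : Prop :=
  is_dist p /\
  (forall p', is_dist p' -> U p' q <= U p q) /\
  (forall q' : probability (borel Y) R, U p q <= U p q').

Definition is_eps_NE (eps : R) (p : X -> R) (q : probability (borel Y) R) : Prop :=
  is_dist p /\
  (forall p', is_dist p' -> U p' q - eps <= U p q) /\
  (forall q' : probability (borel Y) R, U p q <= U p q' + eps).

Definition supp_X (p : X -> R) (S : set X) : Prop := forall x, ~ S x -> p x = 0.
Definition supp_Y (q : probability (borel Y) R) (T : set Y) : Prop :=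
  q (~` T : set (borel Y)) = 0%E.

(* (p,q) is a mixed Nash equilibrium of the finite subgame <S, T, u>,
   viewed as mixed strategies of the whole game supported on S and T *)
Definition is_subgame_NE (S : set X) (T : set Y) (p : X -> R)
    (q : probability (borel Y) R) : Prop :=
  is_dist p /\ supp_X p S /\ supp_Y q T /\
  (forall p', is_dist p' -> supp_X p' S -> U p' q <= U p q) /\
  (forall q' : probability (borel Y) R, supp_Y q' T -> U p q <= U p q').

Definition ccdo_step (Xs : nat -> set X) (Ys : nat -> set Y)
    (p : nat -> X -> R) (q : nat -> probability (borel Y) R)
    (xn : nat -> X) (yn : nat -> Y) (k : nat) : Prop :=
  is_subgame_NE (Xs k) (Ys k) (p k) (q k) /\
  BR1 (q k) (xn k) /\ BR2 (p k) (yn k) /\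
  Xs k.+1 = Xs k `|` [set xn k] /\ Ys k.+1 = Ys k `|` [set yn k].

Definition ccdo_init (Xs : nat -> set X) (Ys : nat -> set Y) : Prop :=
  Xs 0%N !=set0 /\ finite_set (Xs 0%N) /\ Ys 0%N !=set0 /\ finite_set (Ys 0%N).

Definition ccdo_gap (p : nat -> X -> R) (q : nat -> probability (borel Y) R)
    (xn : nat -> X) (yn : nat -> Y) (k : nat) : R :=
  U (pt (xn k)) (q k) - U (p k) (@dirac _ (borel Y) (yn k) R).

End Game.

Definition weak_cvg {R : realType} {Y : ptopologicalType}
    (qs : nat -> probability (borel Y) R) (q : probability (borel Y) R) : Prop :=
  forall f : Y -> R, continuous f -> (exists M : R, forall y, `|f y| <= M) ->
    (fun n => fine (\int[qs n]_(y in [set: borel Y]) (f y)%:E)) @ \oo -->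
      fine (\int[q]_(y in [set: borel Y]) (f y)%:E).

(* Main.v *)
Require Import Defs.
From HB Require Import structures.
From mathcomp Require Import all_boot all_order all_algebra.
From mathcomp Require Import all_classical all_reals all_analysis.
From mathcomp Require Import measurable_realfun lra.
Import Order.TTheory GRing.Theory Num.Theory.
Import numFieldNormedType.Exports.
Local Open Scope classical_set_scope.
Local Open Scope ring_scope.

Lemma cont_meas (R : realType) (Y : ptopologicalType) (f : Y -> R) :
  continuous f -> measurable_fun (setT : set (borel Y)) f.
Proof.
move=> /continuousP cf.
apply: (measurability _ (measurable_realfun.RGenOpens.measurableE R)).
move=> _ [_ [a [b ->] <-]]; rewrite setTI.
apply: sub_sigma_algebra; apply: cf; exact: interval_open.
Qed.

Lemma cont_bnd {R : realType} {Y : ptopologicalType} (f : Y -> R) :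
  compact [set: Y] -> continuous f -> exists M, forall y, `|f y| <= M.
Proof.
move=> cY cf.
have cI : compact (f @` setT) by apply: continuous_compact => //; exact: continuous_subspaceT.
have [M [_ HM]] := compact_bounded cI.
exists (`|M| + 1) => y; apply: HM; last by exists y.
by rewrite ltr_pwDr// ler_norm.
Qed.

Lemma cont_int (R : realType) (Y : ptopologicalType) (f : Y -> R)
  (q : probability (borel Y) R) :
  compact [set: Y] -> continuous f -> q.-integrable setT (EFin \o f).
Proof.
move=> cY cf; apply: measurable_bounded_integrable => //.
- by apply: (le_lt_trans (probability_le1 _ _)) => //; exact: ltry.
- exact: cont_meas.
have [M HM] := cont_bnd _ cY cf.
exists M; split; first exact: num_real.
move=> z Mz y _; apply: le_trans (HM y) _; exact: ltW.
Qed.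

Lemma mono_sets {T : Type} (S : nat -> set T) (z : nat -> T) :
  (forall k, S k.+1 = S k `|` [set z k]) ->
  forall k j, (k <= j)%N -> S k `<=` S j.
Proof.
move=> HS k j /subnK <-; elim: (j - k)%N => [|n IH] w; first by rewrite add0n.
by move=> /IH; rewrite addSn HS; left.
Qed.

Lemma Xstab {X : finType} (Xs : nat -> set X) (xn : nat -> X) :
  (forall k, Xs k.+1 = Xs k `|` [set xn k]) ->
  exists K, forall k, (K <= k)%N -> Xs k (xn k).
Proof.
move=> HX.
pose f x := if pselect (exists k, Xs k x) is left h then projT1 (cid h) else 0%N.
exists (\max_x f x) => k Kk.
have ex : exists k0, Xs k0 (xn k) by exists k.+1; rewrite HX; right.
have : Xs (f (xn k)) (xn k).
  rewrite /f; case: pselect => [h|/(_ ex)//]; exact: projT2 (cid h).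
have le : (f (xn k) <= k)%N by apply: leq_trans Kk; exact: leq_bigmax.
by move=> H; exact: (mono_sets _ _ HX _ _ le _ H).
Qed.

Lemma homo_ge (phi : nat -> nat) :
  {homo phi : m n / (m < n)%N >-> (m < n)%N} -> forall n, (n <= phi n)%N.
Proof.
move=> h; elim=> [|n IH] //; apply: leq_ltn_trans IH _; exact: h.
Qed.

Section G2.
Context {R : realType} {X : finType} {Y : pseudoPMetricType R}.
Variable u : X -> Y -> R.
Hypothesis hcu : forall x, continuous (u x).
Hypothesis cY : compact [set: Y].

Lemma U_pt x (q : {measure set (borel Y) -> \bar R}) :
  U u (pt x) q = Rintegral q setT (u x).
Proof.
rewrite /U (bigD1 x) //= /pt eqxx mul1r big1 ?addr0 //.
by move=> i /negbTE ->; rewrite mul0r.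
Qed.

Lemma U_dirac p (y : Y) :
  U u p (@dirac _ (borel Y) y R) = \sum_x p x * u x y.
Proof.
apply: eq_bigr => x _; congr (_ * _).
rewrite integral_dirac //; last first.
  by apply/measurable_EFinP; exact: cont_meas.
by rewrite /dirac indicE in_setT mul1e.
Qed.

Lemma cont_sum (p : X -> R) : continuous (fun y => \sum_x p x * u x y).
Proof.
move=> y; apply: (cvg_big (op := +%R) (x0 := 0)) => //.
  exact: add_continuous.
move=> x _; apply: cvgM; first exact: cvg_cst.
exact: hcu.
Qed.

Lemma Rint_sum (p : X -> R) (q : probability (borel Y) R) (s : seq X) :
  Rintegral q setT (fun y => \sum_(x <- s) p x * u x y) =
  \sum_(x <- s) p x * Rintegral q setT (u x).
Proof.
elim: s => [|a s IH].
  rewrite big_nil.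
  under eq_Rintegral do rewrite big_nil.
  by rewrite Rintegral_cst // mul0r.
rewrite big_cons.
under eq_Rintegral do rewrite big_cons.
rewrite RintegralD //.
- by rewrite RintegralZl // ?IH //; exact: cont_int.
- apply: cont_int => //; move=> y; apply: cvgM; [exact: cvg_cst| exact: hcu].
- apply: cont_int => //; move=> y; apply: (cvg_big (op := +%R) (x0 := 0)) => //.
    exact: add_continuous.
  move=> x _; apply: cvgM; first exact: cvg_cst.
  exact: hcu.
Qed.

Lemma U_int p (q : probability (borel Y) R) :
  U u p q = Rintegral q setT (fun y => \sum_x p x * u x y).
Proof. by rewrite Rint_sum. Qed.

Lemma U_lb p (q : probability (borel Y) R) c :
  (forall y, c <= \sum_x p x * u x y) -> c <= U u p q.
Proof.
move=> H; rewrite U_int.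
have -> : c = Rintegral q setT (fun _ => c).
  rewrite Rintegral_cst // -{1}(mulr1 c); congr (c * _).
  rewrite -[1]/(fine 1%E); congr fine; symmetry; exact: probability_setT.
apply: (@le_Rintegral _ _ _ q) => //.
- apply: cont_int => //; exact: cst_continuous.
- by apply: cont_int => //; exact: cont_sum.
Qed.

Lemma U_ub p (q : {measure set (borel Y) -> \bar R}) c :
  is_dist p -> (forall x, U u (pt x) q <= c) -> U u p q <= c.
Proof.
move=> [p0 p1] H.
have -> : c = \sum_x p x * c by rewrite -mulr_suml p1 mul1r.
apply: ler_sum => x _; apply: ler_wpM2l => //.
by have := H x; rewrite U_pt.
Qed.

Lemma pt_dist x : is_dist (pt x : X -> R).
Proof.
split; first by move=> x'; rewrite /pt; case: eqP.
rewrite (bigD1 x) //= /pt eqxx big1 ?addr0 // => i /negbTE -> //.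
Qed.

Lemma pt_supp x (S : set X) : S x -> supp_X (pt x : X -> R) S.
Proof. by move=> Sx x' nS; rewrite /pt; case: eqP => // e; rewrite e in nS. Qed.

Lemma sum_close (p : X -> R) y1 y2 d : is_dist p ->
  (forall x, u x y1 - u x y2 <= d) ->
  \sum_x p x * u x y1 <= \sum_x p x * u x y2 + d.
Proof.
move=> [p0 p1] H.
have -> : \sum_x p x * u x y2 + d = \sum_x p x * (u x y2 + d).
  by rewrite -[in LHS](mul1r d) -p1 mulr_suml -big_split; apply: eq_bigr => x _; rewrite mulrDr.
apply: ler_sum => x _; apply: ler_wpM2l => //; have := H x; lra.
Qed.

Lemma Ykey (Ys : nat -> set Y) (p : nat -> X -> R)
  (q : nat -> probability (borel Y) R) (yn : nat -> Y) (phi : nat -> nat) :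
  (forall k, Ys k.+1 = Ys k `|` [set yn k]) ->
  (forall k y, Ys k y -> U u (p k) (q k) <= \sum_x p k x * u x y) ->
  (forall k, is_dist (p k)) ->
  {homo phi : m n / (m < n)%N >-> (m < n)%N} ->
  forall d, 0 < d -> forall N, exists n, (N <= n)%N /\
    U u (p (phi n)) (q (phi n)) - d <= \sum_x p (phi n) x * u x (yn (phi n)).
Proof.
move=> HY HNE Hd hphi d d0 N.
have [yb [_ clyb]] := cY ((fun n => yn (phi n)) @ \oo) _ filterT.
pose B := [set y | forall x, `|u x yb - u x y| < d / 2].
have nB : nbhs yb B.
  apply: filter_forall => x.
  by apply: cvgr_dist_lt; [exact: hcu | rewrite divr_gt0].
have FA M : ((fun n => yn (phi n)) @ \oo) [set yn (phi n) | n in [set n | (M <= n)%N]].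
  by apply: filterS (nbhs_infty_ge M) => n Mn; exists n.
have [_ [[n1 /= Nn1 <-] B1]] := clyb _ _ (FA N) nB.
have [_ [[n2 /= n12 <-] B2]] := clyb _ _ (FA n1.+1) nB.
exists n2; split; first by apply: leq_trans Nn1 (ltnW n12).
have H1 : Ys (phi n2) (yn (phi n1)).
  apply: (mono_sets _ _ HY _ _ (hphi _ _ n12)); rewrite HY; by right.
have := HNE _ _ H1.
have H2 := sum_close (p (phi n2)) (yn (phi n1)) (yn (phi n2)) d (Hd (phi n2)).
move=> H3; suff H4 : forall x, u x (yn (phi n1)) - u x (yn (phi n2)) <= d.
  by have := H2 H4; lra.
move=> x; have := B1 x; have := B2 x.
rewrite !ltr_distl => /andP[a1 a2] /andP[b1 b2]; lra.
Qed.


Section Steps.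
Variables (Xs : nat -> set X) (Ys : nat -> set Y) (p : nat -> X -> R)
  (q : nat -> probability (borel Y) R) (xn : nat -> X) (yn : nat -> Y) (k : nat).
Hypothesis st : ccdo_step u Xs Ys p q xn yn k.

Lemma sf_dist : is_dist (p k).
Proof. by case: st => [[]]. Qed.

Lemma sf_X : Xs k.+1 = Xs k `|` [set xn k].
Proof. by case: st => _ [_ [_ []]]. Qed.

Lemma sf_Y : Ys k.+1 = Ys k `|` [set yn k].
Proof. by case: st => _ [_ [_ []]]. Qed.

Lemma sf_br1 x : U u (pt x) (q k) <= U u (pt (xn k)) (q k).
Proof. by case: st => _ [h _]; apply: h. Qed.

Lemma sf_br2 y : \sum_x p k x * u x (yn k) <= \sum_x p k x * u x y.
Proof. by case: st => _ [_ [h _]]; have := h y; rewrite !U_dirac. Qed.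

Lemma sf_nex : Xs k (xn k) -> U u (pt (xn k)) (q k) <= U u (p k) (q k).
Proof.
move=> hx; case: st => [[_ [_ [_ [h _]]]] _]; apply: h; first exact: pt_dist.
exact: pt_supp.
Qed.

Lemma sf_ney y : Ys k y -> U u (p k) (q k) <= \sum_x p k x * u x y.
Proof.
move=> hy; case: st => [[_ [_ [_ [_ h]]]] _].
rewrite -U_dirac; apply: h.
have E : (@dirac _ (borel Y) y R) (~` Ys k) = 0%E.
  by rewrite diracE memNset //= => /(_ hy).
exact: E.
Qed.

Lemma sf_low : \sum_x p k x * u x (yn k) <= U u (p k) (q k).
Proof. by apply: U_lb => y; exact: sf_br2. Qed.

Lemma sf_up : U u (p k) (q k) <= U u (pt (xn k)) (q k).
Proof. by apply: U_ub; [exact: sf_dist | exact: sf_br1]. Qed.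

End Steps.
Arguments sf_dist {Xs Ys p q xn yn k}.
Arguments sf_X {Xs Ys p q xn yn k}.
Arguments sf_Y {Xs Ys p q xn yn k}.
Arguments sf_br1 {Xs Ys p q xn yn k}.
Arguments sf_br2 {Xs Ys p q xn yn k}.
Arguments sf_nex {Xs Ys p q xn yn k}.
Arguments sf_ney {Xs Ys p q xn yn k}.
Arguments sf_low {Xs Ys p q xn yn k}.
Arguments sf_up {Xs Ys p q xn yn k}.

Lemma part1 (Xs : nat -> set X) (Ys : nat -> set Y) (p : nat -> X -> R)
      (q : nat -> probability (borel Y) R) (xn : nat -> X) (yn : nat -> Y) :
    (forall k, ccdo_step u Xs Ys p q xn yn k) ->
    forall (phi : nat -> nat) (pstar : X -> R) (qstar : probability (borel Y) R),
      {homo phi : m n / (m < n)%N >-> (m < n)%N} ->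
      is_dist pstar ->
      (forall x : X, (fun n => p (phi n) x) @ \oo --> pstar x) ->
      weak_cvg (fun n => q (phi n)) qstar ->
      is_NE u pstar qstar.
Proof.
move=> step phi pstar qstar hphi dstar cvp wq.
have cvg_pt x : (fun n => U u (pt x) (q (phi n))) @ \oo --> U u (pt x) qstar.
  have -> : (fun n => U u (pt x) (q (phi n))) = (fun n => Rintegral (q (phi n)) setT (u x)).
    by apply/funext => n; rewrite U_pt.
  rewrite U_pt; apply: wq => //; exact: cont_bnd.
have cvg_UU : (fun n => U u (p (phi n)) (q (phi n))) @ \oo --> U u pstar qstar.
  rewrite /U; apply: (cvg_big (op := +%R) (x0 := 0)) => //.
    exact: add_continuous.
  move=> x _; apply: cvgM; first exact: cvp.
  apply: wq => //; exact: cont_bnd.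
have cvg_y y : (fun n => \sum_x p (phi n) x * u x y) @ \oo --> \sum_x pstar x * u x y.
  apply: (cvg_big (op := +%R) (x0 := 0)) => //.
    exact: add_continuous.
  move=> x _; apply: cvgM; first exact: cvp.
  exact: cvg_cst.
split => //; split.
  move=> p' dp'; apply: U_ub => // x.
  have [K HK] := Xstab _ _ (fun k => sf_X (step k)).
  apply: (ler_cvg_to (cvg_pt x) cvg_UU).
  apply: filterS (nbhs_infty_ge K) => n Kn.
  have Kp : (K <= phi n)%N := leq_trans Kn (homo_ge _ hphi n).
  apply: le_trans (sf_br1 (step _) x) _.
  exact: sf_nex (step _) (HK _ Kp).
move=> q'; apply: U_lb => y.
apply/ler_addgt0Pr => e e0.
have d0 : 0 < e / 3 by rewrite divr_gt0.
have h1 : \forall n \near \oo, `|U u pstar qstar - U u (p (phi n)) (q (phi n))| < e / 3.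
  exact: cvgr_dist_lt.
have h2 : \forall n \near \oo, `|\sum_x pstar x * u x y - \sum_x p (phi n) x * u x y| < e / 3.
  exact: cvgr_dist_lt.
have [N _ HN] := filterI h1 h2.
have [n [Nn Hn]] := Ykey _ _ _ _ _ (fun k => sf_Y (step k)) (fun k => sf_ney (step k))
  (fun k => sf_dist (step k)) hphi _ d0 N.
have [a1 a2] := HN n Nn.
have b := sf_br2 (step (phi n)) y.
move: a1 a2; rewrite !ltr_distl => /andP[c1 c2] /andP[c3 c4]; lra.
Qed.

Lemma part2a eps : 0 < eps -> forall (Xs : nat -> set X) (Ys : nat -> set Y) (p : nat -> X -> R)
        (q : nat -> probability (borel Y) R) (xn : nat -> X) (yn : nat -> Y),
      (forall k, ccdo_step u Xs Ys p q xn yn k) ->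
      exists k, ccdo_gap u p q xn yn k <= eps.
Proof.
move=> e0 Xs Ys p q xn yn step.
have [K HK] := Xstab _ _ (fun k => sf_X (step k)).
have [n [Kn Hn]] := Ykey _ _ _ _ id (fun k => sf_Y (step k)) (fun k => sf_ney (step k))
  (fun k => sf_dist (step k)) (fun m n h => h) _ e0 K.
exists n; rewrite /ccdo_gap U_dirac.
have := sf_nex (step n) (HK n Kn); move: Hn => /=; lra.
Qed.

Lemma part2b eps : 0 < eps -> forall (Xs : nat -> set X) (Ys : nat -> set Y) (p : nat -> X -> R)
        (q : nat -> probability (borel Y) R) (xn : nat -> X) (yn : nat -> Y) (n : nat),
      ccdo_step u Xs Ys p q xn yn n ->
      ccdo_gap u p q xn yn n <= eps ->
      is_eps_NE u eps (p n) (q n).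
Proof.
move=> e0 Xs Ys p q xn yn n st; rewrite /ccdo_gap U_dirac => gap.
split; first exact: sf_dist st.
split.
  move=> p' dp'.
  have h1 := U_ub _ (q n) _ dp' (sf_br1 st).
  have h2 := sf_low st; lra.
move=> q'.
have h1 := sf_up st.
have h2 : \sum_x p n x * u x (yn n) <= U u (p n) q' by apply: U_lb => y; exact: (sf_br2 st).
lra.
Qed.

End G2.

Theorem theorem2 (R : realType) (X : finType) (Y : pseudoPMetricType R)
  (u : X -> Y -> R)
  (hXne : [set: X] !=set0) (hYne : [set: Y] !=set0)
  (hYhaus : hausdorff_space Y) (hYcpt : compact [set: Y])
  (hucont : forall x : X, continuous (u x)) :
  (* (1) epsilon = 0, infinitely many iterations *)
  (forall (Xs : nat -> set X) (Ys : nat -> set Y) (p : nat -> X -> R)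
      (q : nat -> probability (borel Y) R) (xn : nat -> X) (yn : nat -> Y),
    ccdo_init Xs Ys ->
    (forall k, ccdo_step u Xs Ys p q xn yn k) ->
    (forall k, 0 < ccdo_gap u p q xn yn k) ->
    forall (phi : nat -> nat) (pstar : X -> R) (qstar : probability (borel Y) R),
      {homo phi : m n / (m < n)%N >-> (m < n)%N} ->
      is_dist pstar ->
      (forall x : X, (fun n => p (phi n) x) @ \oo --> pstar x) ->
      weak_cvg (fun n => q (phi n)) qstar ->
      is_NE u pstar qstar) /\
  (* (2) epsilon > 0: termination and epsilon-equilibrium output *)
  (forall eps : R, 0 < eps ->
    (forall (Xs : nat -> set X) (Ys : nat -> set Y) (p : nat -> X -> R)
        (q : nat -> probability (borel Y) R) (xn : nat -> X) (yn : nat -> Y),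
      ccdo_init Xs Ys ->
      (forall k, ccdo_step u Xs Ys p q xn yn k) ->
      exists k, ccdo_gap u p q xn yn k <= eps) /\
    (forall (Xs : nat -> set X) (Ys : nat -> set Y) (p : nat -> X -> R)
        (q : nat -> probability (borel Y) R) (xn : nat -> X) (yn : nat -> Y)
        (n : nat),
      ccdo_init Xs Ys ->
      (forall k, (k <= n)%N -> ccdo_step u Xs Ys p q xn yn k) ->
      (forall k, (k < n)%N -> eps < ccdo_gap u p q xn yn k) ->
      ccdo_gap u p q xn yn n <= eps ->
      is_eps_NE u eps (p n) (q n))).
Proof.
split.
  move=> Xs Ys p q xn yn _ step _.
  exact: (part1 _ hucont hYcpt _ _ _ _ _ _ step).
move=> eps e0; split.
  move=> Xs Ys p q xn yn _ step.
  exact: (part2a _ hucont hYcpt _ e0 _ _ _ _ _ _ step).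
move=> Xs Ys p q xn yn n _ step _ gap.
exact: (part2b _ hucont hYcpt _ e0 _ _ _ _ _ _ _ (step n (leqnn n)) gap).
Qed.
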